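(* Let $x\in J$ with $\mathrm{supp}(x)=\mathbb N$, and let $(A_n)$ be a sequence of nonempty finite subsets of $\mathbb N$ converging pointwise (i.e. their indicator functions converge pointwise) to a set $A\subset\mathbb N$. Then $\lim_{n\to\infty}\|x\|_{A_n}=\|x\|_A$.
   Context: For a real sequence $x=(x(n))_{n\in\mathbb N}$ let $\|x\|_J=\sup\bigl(\sum_{i=1}^n|\sum_{k\in I_i}x(k)|^2\bigr)^{1/2}$ over all $n$ and all families of pairwise disjoint intervals $I_1,\dots,I_n$ of $\mathbb N$ (intervals: nonempty sets of consecutive positive integers). $J=\{x:\|x\|_J<\infty\}$; for $x\in J$ and any interval $I$ (finite or infinite) the series $\sum_{k\in I}x(k)$ converges. $\mathrm{supp}(x)=\{n:x(n)\ne0\}$. For $A\subset\mathbb N$, with $m_0=0$, the partition $\mathcal P_A$ of $\mathbb N$ into intervals is: $\{\mathbb N\}$ if $A=\emptyset$; $\{(m_{i-1},m_i]\}_{i=1}^k\cup\{(m_k,\infty)\}$ if $A=\{m_1<\dots<m_k\}$; $\{(m_{i-1},m_i]\}_{i\in\mathbb N}$ if $A=\{m_1<m_2<\cdots\}$ is infinite (intervals taken in $\mathbb N$). For $x\in J$, $\|x\|_A=\bigl(\sum_{I\in\mathcal P_A}|\sum_{k\in I}x(k)|^2\bigr)^{1/2}$. *)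

(* Defs.v *)
From HB Require Import structures.
From mathcomp Require Import all_boot all_order all_algebra.
From mathcomp Require Import all_classical all_reals all_analysis.
Set Implicit Arguments. Unset Strict Implicit. Unset Printing Implicit Defensive.
Import Order.TTheory GRing.Theory Num.Theory.
Import numFieldNormedType.Exports.
Local Open Scope classical_set_scope.
Local Open Scope ring_scope.

(* Convention: the paper's N = {1,2,...} is the set of positive elements of
   nat; a real sequence is x : nat -> R whose value at 0 is never used. *)

Definition posnat : set nat := [set k | (0 < k)%N].

(* ||x||_J < oo : sup over finite families of pairwise disjoint (finite)
   intervals [a_i, b_i] (1 <= a_i <= b_i) of sum_i |sum_{k in I_i} x k|^2. *)
Definition inJ (R : realType) (x : nat -> R) : Prop :=
  exists M : R, forall (n : nat) (a b : nat -> nat),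
    (forall i, (i < n)%N -> (0 < a i)%N && (a i <= b i)%N) ->
    (forall i j, (i < n)%N -> (j < n)%N -> i != j ->
       (b i < a j)%N || (b j < a i)%N) ->
    \sum_(i < n) `| \sum_(a i <= k < (b i).+1) x k | ^+ 2 <= M.

(* sum_{k in I} x(k) for an interval I of N: the limit of the partial sums
   taken in the natural order (a finite sum when I is finite, a series when
   I is an infinite interval). *)
Definition isum (R : realType) (x : nat -> R) (I : set nat) : R :=
  limn (fun N => \sum_(0 <= k < N | k \in I) x k).

(* The partition P_A of N into intervals, with m_0 = 0. *)
Definition partA (A : set nat) : set (set nat) :=
  [set I |
    (* A = {m_1 < ... < m_k} finite (k = 0 allowed), s = [:: m_1; ...; m_k] *)
    (exists s : seq nat, sorted ltn (0 :: s) /\ [set` s] = A /\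
       ((exists i, (i < size s)%N /\
           I = [set k | (nth 0 (0 :: s) i < k)%N && (k <= nth 0 (0 :: s) i.+1)%N])
        \/ I = [set k | (last 0 s < k)%N]))
    \/
    (* A = {m_1 < m_2 < ...} infinite, m 0 = m_0 = 0 *)
    (exists m : nat -> nat, m 0 = 0%N /\ (forall i, (m i < m i.+1)%N) /\
       range (fun i => m i.+1) = A /\
       exists i, I = [set k | (m i < k)%N && (k <= m i.+1)%N])].

Definition normA (R : realType) (x : nat -> R) (A : set nat) : R :=
  Num.sqrt (fine (\esum_(I in partA A) ((`| isum x I | ^+ 2)%:E))).

(* Main.v *)
Require Import Defs.
From HB Require Import structures.
From mathcomp Require Import all_boot all_order all_algebra.
From mathcomp Require Import all_classical all_reals all_analysis.
From mathcomp Require Import lra ring.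
Set Implicit Arguments. Unset Strict Implicit. Unset Printing Implicit Defensive.
Import Order.TTheory GRing.Theory Num.Theory.
Import numFieldNormedType.Exports.
Local Open Scope classical_set_scope.
Local Open Scope ring_scope.


Section James.
Variable R : realType.
Variable x : nat -> R.

Definition P (n : nat) : R := \sum_(0 <= k < n.+1) x k.

Fixpoint chain (K : nat) (s : seq (nat * nat)) : bool :=
  if s is p :: s' then [&& (K <= p.1)%N, (p.1 < p.2)%N & chain p.2 s'] else true.

Definition Q (s : seq (nat * nat)) : R := \sum_(p <- s) (P p.2 - P p.1) ^+ 2.

Definition endp K (s : seq (nat * nat)) := last K (map snd s).

Lemma chain_cat K s t : chain K (s ++ t) = chain K s && chain (endp K s) t.
Proof.
elim: s K => [|[a b] s IH] K //=.
by rewrite IH !andbA.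
Qed.

Lemma chain_mono K K' s : (K' <= K)%N -> chain K s -> chain K' s.
Proof.
case: s => [|[a b] s] //= hK /and3P[h1 h2 h3].
by rewrite (leq_trans hK h1) h2 h3.
Qed.

Lemma chain_nth K s : chain K s ->
  (forall i, (i < size s)%N -> (K <= (nth (0,0)%N s i).1)%N /\
     ((nth (0,0)%N s i).1 < (nth (0,0)%N s i).2)%N) /\
  (forall i j, (i < j)%N -> (j < size s)%N ->
     ((nth (0,0)%N s i).2 <= (nth (0,0)%N s j).1)%N).
Proof.
elim: s K => [|[a b] s IH] K /=; first by split => [i|i j] //; rewrite ltn0.
move=> /and3P[h1 h2 h3]; have [IH1 IH2] := IH _ h3; split.
  case=> [|i] //= hi.
  have [] := IH1 i hi => l1 l2; split => //.
  by apply: leq_trans l1; apply: leq_trans (ltnW h2).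
case=> [|i] [|j] //= hij hj.
  by case: (IH1 j hj).
exact: IH2.
Qed.

Lemma sumP a b : (a <= b)%N -> \sum_(a.+1 <= k < b.+1) x k = P b - P a.
Proof.
move=> ab; rewrite /P (big_cat_nat _ (m := 0) (n := a.+1) (p := b.+1)) //=.
by rewrite addrC addrK.
Qed.

Lemma chain_bound : inJ x -> exists M, forall s, chain 0 s -> Q s <= M.
Proof.
move=> [M HM]; exists M => s cs.
have [C1 C2] := chain_nth cs.
have := HM (size s) (fun i => (nth (0,0)%N s i).1.+1) (fun i => (nth (0,0)%N s i).2).
have -> : \sum_(i < size s) `|\sum_((nth (0,0)%N s i).1.+1 <= k < (nth (0,0)%N s i).2.+1) x k| ^+ 2
   = Q s.
  rewrite /Q (big_nth (0,0)%N) big_mkord; apply: eq_bigr => i _.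
  have [_ l] := C1 i (ltn_ord i).
  by rewrite sumP ?(ltnW l) // real_normK // num_real.
apply.
  by move=> i hi; have [_ l] := C1 i hi; rewrite l.
move=> i j hi hj; rewrite neq_ltn => /orP[] h.
  by apply/orP; left; rewrite ltnS C2.
by apply/orP; right; rewrite ltnS C2.
Qed.

Lemma tail_small : inJ x -> forall e, 0 < e -> exists K, forall s, chain K s -> Q s <= e.
Proof.
move=> hJ e e0; have [M HM] := chain_bound hJ.
apply: contrapT => /forallNP H.
have H' : forall K, exists s, chain K s /\ e < Q s.
  move=> K; have /existsNP [s /not_implyP [cs Qs]] := H K.
  by exists s; split => //; rewrite ltNge; apply/negP.
have big : forall n : nat, exists s, chain 0 s /\ n%:R * e <= Q s.
  elim=> [|n [s [cs Qs]]].
    by exists [::]; split => //; rewrite mul0r /Q big_nil.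
  have [t [ct Qt]] := H' (endp 0 s).
  exists (s ++ t); split; first by rewrite chain_cat cs ct.
  rewrite /Q big_cat /= -/(Q s) -/(Q t) mulrSr mulrDl mul1r.
  by apply: lerD => //; exact: ltW.
have [s [cs Qs]] := big (Num.truncn (M / e)).+1.
have := HM s cs; have := truncnS_gt (M / e).
rewrite ltr_pdivrMr // => h1 h2.
have := lt_le_trans h1 Qs; rewrite ltNge h2 //.
Qed.

End James.


Section James2.
Variable R : realType.
Variable x : nat -> R.
Hypothesis hJ : inJ x.

Lemma sq_le_abs (y d : R) : 0 <= d -> y ^+ 2 <= d ^+ 2 -> `|y| <= d.
Proof.
move=> d0 h; by rewrite -(ler_pXn2r (n := 2)) // ?real_normK ?num_real.
Qed.

Lemma P_cvg : cvgn (P x).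
Proof.
apply/cauchy_cvgP/cauchy_exP => e e0.
have e2 : 0 < e ^+ 2 / 2 by rewrite divr_gt0 // exprn_gt0.
have [K HK] := tail_small hJ e2.
exists (P x K); exists K => // n /= hn.
rewrite -ball_normE /=.
case: (ltngtP K n) => [Kn||->]; last 2 first.
- by rewrite ltnNge hn.
- by rewrite subrr normr0.
have := HK [:: (K, n)]; rewrite /= leqnn Kn /Q big_seq1 /= => /(_ isT) h.
apply: (@le_lt_trans _ _ (Num.sqrt (e ^+ 2 / 2))).
  apply: sq_le_abs; first exact: sqrtr_ge0.
  by rewrite sqr_sqrtr ?(ltW e2) // -sqrrN opprB.
rewrite -(@ltr_pXn2r _ 2) ?nnegrE ?sqrtr_ge0 ?(ltW e0) //.
rewrite sqr_sqrtr ?(ltW e2) // ltr_pdivrMr // ltr_pMr ?exprn_gt0 //.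
by rewrite ltr1n.
Qed.

Definition pinf := limn (P x).

Lemma isum_fin lo hi : (lo <= hi)%N ->
  isum x [set k | (lo < k)%N && (k <= hi)%N] = P x hi - P x lo.
Proof.
move=> lh; rewrite /isum; apply: lim_near_cst => //.
exists hi.+1 => // N /= hN.
rewrite -sumP // (big_nat_widen _ _ _ _ _ hN).
rewrite (big_nat_widenl _ _ _ _ _ (leq0n lo.+1)).
apply: eq_bigl => k; apply/idP/idP; rewrite in_setE /=.
  by move=> /andP[a b]; rewrite ltnS b a.
by move=> /andP[a b]; rewrite b -ltnS a.
Qed.

Lemma isum_inf lo : isum x [set k | (lo < k)%N] = pinf - P x lo.
Proof.
rewrite /isum; apply: cvg_lim => //.
rewrite -cvg_shiftS /=.
have -> : (fun n => \sum_(0 <= k < n.+1 | k \in [set k | (lo < k)%N]) x k) =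
   (fun n => if (lo <= n)%N then P x n - P x lo else
     \sum_(0 <= k < n.+1 | k \in [set k | (lo < k)%N]) x k).
  apply: funext => n; case: ifPn => // ln.
  rewrite -sumP // (big_nat_widenl _ _ _ _ _ (leq0n lo.+1)).
  apply: eq_bigl => k; apply/idP/idP; rewrite in_setE //=.
apply: (@cvg_trans _ ((fun n => P x n - P x lo) @ \oo)).
  apply: near_eq_cvg; exists lo => // n /= hn; by rewrite hn.
apply: cvgB; [exact: P_cvg | exact: cvg_cst].
Qed.

End James2.


Lemma mem_le_sumn (s : seq nat) y : y \in s -> (y <= sumn s)%N.
Proof.
elim: s => [|a s IH] //=; rewrite in_cons => /orP[/eqP ->|/IH h].
  exact: leq_addr.
exact: leq_trans h (leq_addl _ _).
Qed.

Lemma incr_ge (m : nat -> nat) : (forall i, (m i < m i.+1)%N) -> forall i, (i <= m i)%N.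
Proof.
move=> hm; elim=> [|i IH] //; exact: leq_ltn_trans IH (hm i).
Qed.

Lemma incr_lt (m : nat -> nat) : (forall i, (m i < m i.+1)%N) ->
  forall i j, (i < j)%N -> (m i < m j)%N.
Proof.
move=> hm i j; elim: j => [|j IH] //; rewrite ltnS leq_eqVlt => /orP[/eqP ->|/IH h] //.
exact: ltn_trans h (hm j).
Qed.

Lemma incr_le (m : nat -> nat) : (forall i, (m i < m i.+1)%N) ->
  forall i j, (i <= j)%N -> (m i <= m j)%N.
Proof.
move=> hm i j; rewrite leq_eqVlt => /orP[/eqP ->|h] //.
exact: ltnW (incr_lt hm h).
Qed.

Lemma incr_not_fin (m : nat -> nat) (s : seq nat) : (forall i, (m i < m i.+1)%N) ->
  range (fun i => m i.+1) = [set` s] -> False.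
Proof.
move=> hm E.
have : [set` s] (m (sumn s).+1) by rewrite -E; exists (sumn s).
move=> /= /mem_le_sumn h.
have h2 := incr_ge hm (sumn s).+1.
by have := leq_trans h2 h; rewrite ltnn.
Qed.

Definition Iv lo hi : set nat := [set k | (lo < k)%N && (k <= hi)%N].
Definition Iinf lo : set nat := [set k | (lo < k)%N].

Definition Ifun (s : seq nat) (i : nat) : set nat :=
  if (i < size s)%N then Iv (nth 0%N (0%N :: s) i) (nth 0%N (0%N :: s) i.+1)
  else Iinf (nth 0%N (0%N :: s) i).

Lemma seteq_mem (s t : seq nat) : [set` s] = [set` t] -> s =i t.
Proof.
move=> E y; have := congr1 (fun A => A y) E => /= h.
by apply/idP/idP => H; [rewrite -h | rewrite h].
Qed.

Lemma nth_size_last (s : seq nat) : nth 0%N (0%N :: s) (size s) = last 0%N s.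
Proof.
by have := nth_last 0%N (0%N :: s).
Qed.

Lemma partA_fin (s : seq nat) : sorted ltn (0%N :: s) ->
  partA [set` s] = Ifun s @` [set i | (i <= size s)%N].
Proof.
move=> ss; have ss' : sorted ltn s := path_sorted ss.
apply/seteqP; split => I.
  case=> [[s' [ss2 [E H]]]|[m [m0 [hm [E _]]]]]; last first.
    by exfalso; exact: incr_not_fin hm E.
  have ss2' : sorted ltn s' := path_sorted ss2.
  have es : s' = s.
    by apply: (irr_sorted_eq ltn_trans ltnn) => //; exact: seteq_mem.
  subst s'.
  case: H => [[i [hi ->]]|->].
    by exists i; [exact: ltnW | rewrite /Ifun hi].
  exists (size s); first exact: leqnn.
  rewrite /Ifun ltnn; congr Iinf; exact: nth_size_last.
case=> i /= hi <-; left; exists s; split => //; split => //.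
rewrite /Ifun; case: ifPn => h.
  by left; exists i.
right; have -> : i = size s by apply/eqP; rewrite eqn_leq hi leqNgt.
by rewrite nth_size_last.
Qed.

Lemma qlt (s : seq nat) : sorted ltn (0%N :: s) -> forall i j, (i < j)%N -> (j <= size s)%N ->
  (nth 0%N (0%N :: s) i < nth 0%N (0%N :: s) j)%N.
Proof.
move=> ss i j ij js.
apply: (sorted_ltn_nth ltn_trans 0%N ss) => //=; rewrite inE /= ltnS //.
exact: leq_trans (ltnW ij) js.
Qed.

Lemma Ifun_gt s i k : Ifun s i k -> (nth 0%N (0%N :: s) i < k)%N.
Proof. by rewrite /Ifun; case: ifPn => _ //= /andP[]. Qed.

Lemma Ifun_inj s : sorted ltn (0%N :: s) -> set_inj [set i | (i <= size s)%N] (Ifun s).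
Proof.
move=> ss.
have H : forall i j, (i < j)%N -> (j <= size s)%N -> Ifun s i <> Ifun s j.
  move=> i j ij js E.
  have iS : (i < size s)%N := leq_trans ij js.
  have : Ifun s i (nth 0%N (0%N :: s) i.+1).
    rewrite /Ifun iS /Iv /= leqnn andbT; exact: (qlt ss (ltnSn i) iS).
  rewrite E => /Ifun_gt h.
  have : (nth 0%N (0%N :: s) i.+1 <= nth 0%N (0%N :: s) j)%N.
    move: ij; rewrite leq_eqVlt => /orP[/eqP ->//|h2].
    exact: ltnW (qlt ss h2 js).
  by rewrite leqNgt h.
move=> i j; rewrite !in_setE /= => hi hj E.
case: (ltngtP i j) => // h.
  by exfalso; exact: H h hj E.
by exfalso; exact: H h hi (esym E).
Qed.

Lemma ser_fin (R : realType) (f : nat -> \bar R) n :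
  (\sum_(0 <= i <oo | (i <= n)%N) f i = \sum_(0 <= i < n.+1) f i)%E.
Proof.
apply: lim_near_cst => //; exists n.+1 => // N /= hN.
by rewrite (big_nat_widen _ _ _ _ _ hN).
Qed.

Definition Fv (R : realType) (x : nat -> R) (A : set nat) : R :=
  fine (\esum_(I in partA A) ((`| isum x I | ^+ 2)%:E)).

Lemma FF (R : realType) (x : nat -> R) (s : seq nat) : inJ x -> sorted ltn (0%N :: s) ->
  Fv x [set` s] = \sum_(0 <= i < size s)
     (P x (nth 0%N (0%N :: s) i.+1) - P x (nth 0%N (0%N :: s) i)) ^+ 2
   + (pinf x - P x (nth 0%N (0%N :: s) (size s))) ^+ 2.
Proof.
move=> hJ ss; rewrite /Fv partA_fin //.
rewrite (esum_pred_image _ _ (fun i => (i <= size s)%N)); last first.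
- exact: Ifun_inj.
- by move=> n _.
rewrite ser_fin big_nat_recr //=.
rewrite {2}/Ifun ltnn isum_inf //.
rewrite (eq_big_nat _ _ (F2 := fun i => ((P x (nth 0%N (0%N :: s) i.+1) - P x (nth 0%N (0%N :: s) i)) ^+ 2)%:E)); last first.
  move=> i /andP[_ hi]; rewrite /Ifun hi isum_fin ?real_normK ?num_real //.
  exact: ltnW (qlt ss (ltnSn i) hi).
by rewrite sumEFin -EFinD real_normK ?num_real. 
Qed.


Section James4.
Variable R : realType.
Variable x : nat -> R.
Hypothesis hJ : inJ x.

Lemma tail_inf_bound e K : (forall s, chain K s -> Q x s <= e) ->
  forall s, chain K s -> Q x s + (pinf x - P x (endp K s)) ^+ 2 <= e.
Proof.
move=> H s cs; set L := endp K s.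
have cv : (fun n => Q x s + (P x n - P x L) ^+ 2) @ \oo --> Q x s + (pinf x - P x L) ^+ 2.
  apply: cvgD; first exact: cvg_cst.
  rewrite expr2; apply: cvgM; (apply: cvgB; [exact: P_cvg | exact: cvg_cst]).
rewrite -(cvg_lim _ cv) //; apply: limr_le; first by apply/cvg_ex; exists (Q x s + (pinf x - P x L) ^+ 2).
exists L.+1 => // n /= hn.
have := H (s ++ [:: (L, n)]); rewrite chain_cat cs /= leqnn hn /Q big_cat big_seq1 /=.
by apply.
Qed.

Lemma chain_iota (p : nat -> nat) a n K : (K <= p a)%N ->
  (forall i, (a <= i)%N -> (i < a + n)%N -> (p i < p i.+1)%N) ->
  chain K [seq (p i, p i.+1) | i <- iota a n].
Proof.
elim: n a K => [|n IH] a K //= Ka H.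
rewrite Ka H ?leqnn ?addnS ?ltnS ?leq_addr //=.
apply: IH => // i ai ia; apply: H; first exact: ltnW.
by rewrite addnS -addSn.
Qed.

Lemma endp_iota (p : nat -> nat) a n :
  last (p a) (map snd [seq (p i, p i.+1) | i <- iota a n]) = p (a + n)%N.
Proof.
elim: n a => [|n IH] a /=; first by rewrite addn0.
by rewrite IH addSnnS.
Qed.

Lemma Q_iota (p : nat -> nat) a n :
  Q x [seq (p i, p i.+1) | i <- iota a n] = \sum_(a <= i < (a + n)%N) (P x (p i.+1) - P x (p i)) ^+ 2.
Proof. by rewrite /Q big_map /index_iota addKn. Qed.

End James4.

Lemma path_pts (p : nat -> nat) a n : (forall i, (a <= i)%N -> (i < a + n)%N -> (p i < p i.+1)%N) ->
  path ltn (p a) (map p (iota a.+1 n)).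
Proof.
elim: n a => [|n IH] a H //=.
rewrite H ?leqnn ?addnS ?ltnS ?leq_addr //=.
apply: IH => i ai ia; apply: H; first exact: ltnW.
by rewrite addnS -addSn.
Qed.

Lemma nth_pts (p : nat -> nat) n i : p 0%N = 0%N -> (i <= n)%N ->
  nth 0%N (0%N :: map p (iota 1 n)) i = p i.
Proof.
move=> p0; case: i => [|i] //= hi.
by rewrite (nth_map 0%N) ?size_iota // nth_iota.
Qed.

Lemma sorted_pts (p : nat -> nat) n : p 0%N = 0%N -> (forall i, (i < n)%N -> (p i < p i.+1)%N) ->
  sorted ltn (0%N :: map p (iota 1 n)).
Proof.
move=> p0 H; rewrite /= -{1}p0; apply: path_pts => i _; exact: H.
Qed.

Lemma FFp (R : realType) (x : nat -> R) (p : nat -> nat) n : inJ x -> p 0%N = 0%N ->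
  (forall i, (i < n)%N -> (p i < p i.+1)%N) ->
  Fv x [set` map p (iota 1 n)] = \sum_(0 <= i < n) (P x (p i.+1) - P x (p i)) ^+ 2
     + (pinf x - P x (p n)) ^+ 2.
Proof.
move=> hJ p0 H; rewrite FF //; last exact: sorted_pts.
rewrite size_map size_iota nth_pts //; congr (_ + _).
apply: eq_big_nat => i /andP[_ hi].
by rewrite !nth_pts // ltnW.
Qed.

Lemma incr_le_in (p : nat -> nat) n : (forall i, (i < n)%N -> (p i < p i.+1)%N) ->
  forall i j, (i <= j)%N -> (j <= n)%N -> (p i <= p j)%N.
Proof.
move=> H i j; elim: j => [|j IH]; first by rewrite leqn0 => /eqP ->.
rewrite leq_eqVlt => /orP[/eqP -> //|]; rewrite ltnS => ij jn.
exact: leq_trans (IH ij (ltnW jn)) (ltnW (H j jn)).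
Qed.

Lemma trunc_fin (p : nat -> nat) n K : p 0%N = 0%N ->
  (forall i, (i < n)%N -> (p i < p i.+1)%N) ->
  exists r, [/\ (r <= n)%N, (p r <= K)%N, ((r < n)%N -> (K < p r.+1)%N) &
    [set` map p (iota 1 n)] `&` [set k | (k <= K)%N] = [set` map p (iota 1 r)]].
Proof.
move=> p0 H.
have ex : exists i, (i <= n)%N && (p i <= K)%N by exists 0%N; rewrite p0.
have ub : forall i, (i <= n)%N && (p i <= K)%N -> (i <= n)%N by move=> i /andP[].
case: (ex_maxnP ex ub) => r /andP[rn prK] mx.
exists r; split => //.
  move=> rn'; rewrite ltnNge; apply/negP => h.
  by have := mx r.+1; rewrite rn' h => /(_ isT); rewrite ltnn.
apply/seteqP; split => y /=.
  case; rewrite /in_mem /= => /mapP [i]; rewrite mem_iota => /andP[i1 i2] -> piK.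
  apply/mapP; exists i => //; rewrite mem_iota i1 /=.
  rewrite add1n ltnS; apply: mx; rewrite piK andbT -ltnS; by rewrite add1n in i2.
move=> /mapP [i]; rewrite mem_iota add1n ltnS => /andP[i1 i2] ->; split.
  by apply/mapP; exists i => //; rewrite mem_iota i1 add1n ltnS (leq_trans i2).
exact: leq_trans (incr_le_in H i2 rn) prK.
Qed.

Lemma core_alg (R : realType) (a b c Y e B : R) : 0 <= Y -> 0 <= e -> b ^+ 2 + Y <= e -> c ^+ 2 <= e ->
  `|a| <= B -> `|(a + b) ^+ 2 + Y - (a + c) ^+ 2| <= 4 * B * Num.sqrt e + 2 * e.
Proof.
move=> Y0 e0 hb hc ha.
have se := sqr_sqrtr e0.
have s0 := sqrtr_ge0 e.
have hb' : `|b| <= Num.sqrt e.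
  apply: sq_le_abs => //; rewrite se; lra.
have hc' : `|c| <= Num.sqrt e by apply: sq_le_abs => //; rewrite se.
move: ha hb' hc'; rewrite !ler_norml => /andP[a1 a2] /andP[b1 b2] /andP[c1 c2].
have B0 : 0 <= B by lra.
apply/andP; split; nra.
Qed.


Lemma inf_next (A : set nat) : ~ finite_set A -> forall k, exists y,
  A y /\ (k < y)%N /\ forall z, A z -> (k < z)%N -> (y <= z)%N.
Proof.
move=> nf k.
have ex : exists y, (y \in A) && (k < y)%N.
  apply: contrapT => /forallNP H; apply: nf.
  apply: (@sub_finite_set _ _ [set` iota 0 k.+1]); last by apply/finite_seqP; exists (iota 0 k.+1).
  move=> y Ay; change (y \in iota 0 k.+1); rewrite mem_iota add0n ltnS; case: (leqP y k) => // ky; exfalso.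
  by apply: (H y); rewrite ky andbT in_setE.
case: (ex_minnP ex) => y /andP[Ay ky] mn.
exists y; split; first by rewrite -in_setE.
split => // z Az kz; apply: mn; rewrite kz andbT in_setE //.
Qed.

Lemma enum_inf (A : set nat) : ~ finite_set A -> A `<=` posnat ->
  exists m : nat -> nat, [/\ m 0%N = 0%N, (forall i, (m i < m i.+1)%N) &
    range (fun i => m i.+1) = A].
Proof.
move=> nf Apos.
have [nxt Hn] := choice (inf_next nf).
exists (fun i => iter i nxt 0%N); split => //.
  by move=> i; rewrite iterS; case: (Hn (iter i nxt 0%N)) => _ [].
have incr : forall i, (iter i nxt 0%N < iter i.+1 nxt 0%N)%N.
  by move=> i; rewrite iterS; case: (Hn (iter i nxt 0%N)) => _ [].
apply/seteqP; split => y.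
  by case=> i _ <-; rewrite iterS; case: (Hn (iter i nxt 0%N)).
move=> Ay.
have y0 : (0 < y)%N := Apos _ Ay.
have ex : exists i, (iter i nxt 0%N < y)%N by exists 0%N.
have ub : forall i, (iter i nxt 0%N < y)%N -> (i <= y)%N.
  move=> i h; apply: ltnW; apply: leq_ltn_trans h; exact: (incr_ge incr).
case: (ex_maxnP ex ub) => i hi mx.
exists i => //; apply/eqP; rewrite eqn_leq; apply/andP; split.
  rewrite iterS; case: (Hn (iter i nxt 0%N)) => _ [_]; by apply.
rewrite leqNgt; apply/negP => h.
by have := mx _ h; rewrite ltnn.
Qed.

Lemma enum_uniq (m m' : nat -> nat) : m 0%N = m' 0%N ->
  (forall i, (m i < m i.+1)%N) -> (forall i, (m' i < m' i.+1)%N) ->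
  range (fun i => m i.+1) = range (fun i => m' i.+1) -> forall i, m i = m' i.
Proof.
move=> e0 hm hm' E.
have step : forall (f g : nat -> nat), (forall i, (f i < f i.+1)%N) -> (forall i, (g i < g i.+1)%N) ->
    range (fun i => f i.+1) = range (fun i => g i.+1) ->
    forall i, f i = g i -> (f i.+1 <= g i.+1)%N.
  move=> f g hf hg Efg i fg.
  have : range (fun i => f i.+1) (g i.+1) by rewrite Efg; exists i.
  case=> j _ fj; rewrite -fj.
  apply: (incr_le hf); rewrite ltnNge; apply/negP => ji.
  have := incr_le hf ji; rewrite fj fg leqNgt hg //.
elim=> [|i IH] //; apply/eqP; rewrite eqn_leq (step m m') ?(step m' m) //.
Qed.

Lemma partA_inf (m : nat -> nat) : m 0%N = 0%N -> (forall i, (m i < m i.+1)%N) ->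
  partA (range (fun i => m i.+1)) = (fun i => Iv (m i) (m i.+1)) @` setT.
Proof.
move=> m0 hm; apply/seteqP; split => I.
  case=> [[s [_ [E _]]]|[m' [m0' [hm' [E [i ->]]]]]].
    by exfalso; apply: (incr_not_fin hm); rewrite -E.
  have e := enum_uniq (etrans m0' (esym m0)) hm' hm E.
  by exists i => //; rewrite !e.
case=> i _ <-; right; exists m; split => //; split => //; split => //.
by exists i.
Qed.

Lemma Fv_inf (R : realType) (x : nat -> R) (m : nat -> nat) : inJ x -> m 0%N = 0%N ->
  (forall i, (m i < m i.+1)%N) ->
  Fv x (range (fun i => m i.+1)) =
    fine (\sum_(0 <= i <oo) ((P x (m i.+1) - P x (m i)) ^+ 2)%:E)%E.
Proof.
move=> hJ m0 hm; rewrite /Fv partA_inf // esum_image; last first.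
  move=> i j _ _ E.
  have mem : forall k, Iv (m k) (m k.+1) (m k.+1) by move=> k; rewrite /Iv /= hm leqnn.
  have gt : forall k z, Iv (m k) (m k.+1) z -> (m k < z)%N by move=> k z /andP[].
  case: (ltngtP i j) => // h; exfalso.
    have := mem i; rewrite E => /gt hh.
    by have := incr_le hm h; rewrite leqNgt hh.
  have := mem j; rewrite -E => /gt hh.
  by have := incr_le hm h; rewrite leqNgt hh.
rewrite -nneseries_esumT //; congr fine; apply: eq_eseriesr => i _.
by rewrite isum_fin ?real_normK ?num_real // ltnW.
Qed.


Section Main.
Variable R : realType.
Variable x : nat -> R.
Hypothesis hJ : inJ x.
Variables (e B : R) (K : nat).
Hypothesis HK : forall s, chain K s -> Q x s <= e.
Hypothesis e0 : 0 <= e.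
Hypothesis HB : forall u v, `|P x u - P x v| <= B.


Lemma B0 : 0 <= B.
Proof. by apply: le_trans (HB 0 0); rewrite normr_ge0. Qed.

Lemma bnd0 : 0 <= 4 * B * Num.sqrt e + 2 * e.
Proof. by apply: addr_ge0; [apply: mulr_ge0; [apply: mulr_ge0 => //; exact: B0 | exact: sqrtr_ge0] | apply: mulr_ge0]. Qed.

Lemma c_bound : (pinf x - P x K) ^+ 2 <= e.
Proof.
have := tail_inf_bound hJ HK (s := [::]) isT.
by rewrite /Q big_nil add0r.
Qed.

Lemma tail_pts (p : nat -> nat) r N : (K < p r.+1)%N -> (r.+1 <= N)%N ->
  (forall i, (r.+1 <= i)%N -> (i < N)%N -> (p i < p i.+1)%N) ->
  let s := (K, p r.+1) :: [seq (p i, p i.+1) | i <- iota r.+1 (N - r.+1)] in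
  [/\ chain K s, Q x s = (P x (p r.+1) - P x K) ^+ 2 + \sum_(r.+1 <= i < N) (P x (p i.+1) - P x (p i)) ^+ 2
     & endp K s = p N].
Proof.
move=> Kr rN H s; split.
- rewrite /s /= leqnn Kr /=; apply: chain_iota => //.
  by move=> i h1 h2; apply: H => //; rewrite subnKC in h2.
- rewrite /s /Q big_cons /= -/(Q x _) Q_iota subnKC //.
- by rewrite /s /endp /= endp_iota subnKC.
Qed.

Lemma finish (a b c Y : R) (D : R) :
  0 <= Y -> b ^+ 2 + Y <= e -> c ^+ 2 <= e -> `|a| <= B ->
  D = (a + b) ^+ 2 + Y - (a + c) ^+ 2 ->
  `|D| <= 4 * B * Num.sqrt e + 2 * e.
Proof. by move=> Y0 hb hc ha ->; apply: core_alg. Qed.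

Lemma main_fin (p : nat -> nat) n : p 0%N = 0%N ->
  (forall i, (i < n)%N -> (p i < p i.+1)%N) ->
  `|Fv x [set` map p (iota 1 n)] - Fv x ([set` map p (iota 1 n)] `&` [set k | (k <= K)%N])|
   <= 4 * B * Num.sqrt e + 2 * e.
Proof.
move=> p0 H.
have [r [rn prK hr E]] := trunc_fin K p0 H.
rewrite E.
case: (ltnP r n) => rn'; last first.
  have -> : r = n by apply/eqP; rewrite eqn_leq rn rn'.
  by rewrite subrr normr0 bnd0.
have Kr := hr rn'.
rewrite !FFp //; last by move=> i ir; apply: H; exact: ltn_trans ir rn'.
rewrite (big_cat_nat _ (n := r.+1)) //= big_nat_recr //=.
have [c1 c2 c3] := tail_pts Kr rn' (fun i _ h => H i h).
have := tail_inf_bound hJ HK c1; rewrite c2 c3 => tb.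
apply: (@finish (P x K - P x (p r)) (P x (p r.+1) - P x K) (pinf x - P x K)
   (\sum_(r.+1 <= i < n) (P x (p i.+1) - P x (p i)) ^+ 2 + (pinf x - P x (p n)) ^+ 2)).
- by apply: addr_ge0; [apply: sumr_ge0 => i _; exact: sqr_ge0 | exact: sqr_ge0].
- by rewrite addrA.
- exact: c_bound.
- exact: HB.
- ring.
Qed.


Lemma main_inf (m : nat -> nat) : m 0%N = 0%N -> (forall i, (m i < m i.+1)%N) ->
  `|Fv x (range (fun i => m i.+1)) - Fv x (range (fun i => m i.+1) `&` [set k | (k <= K)%N])|
   <= 4 * B * Num.sqrt e + 2 * e.
Proof.
move=> m0 hm.
have E1 : range (fun i => m i.+1) `&` [set k | (k <= K)%N] =
    [set` map m (iota 1 K.+1)] `&` [set k | (k <= K)%N].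
  apply/seteqP; split => y [hy yK]; split => //.
    case: hy => i _ Ei; rewrite -Ei in yK *; change (m i.+1 \in map m (iota 1 K.+1)).
    apply: map_f; rewrite mem_iota /= add1n !ltnS; apply: ltnW.
    exact: leq_trans (incr_ge hm i.+1) yK.
  move: hy; change (y \in map m (iota 1 K.+1) -> range (fun i => m i.+1) y).
  move=> /mapP [i]; rewrite mem_iota => /andP[i1 _] ->.
  by exists i.-1 => //; rewrite prednK.
have [r [rn prK hr E]] := @trunc_fin m K.+1 K m0 (fun i _ => hm i).
rewrite E1 E.
have rK : (r < K.+1)%N by rewrite ltnS (leq_trans (incr_ge hm r)).
have Kr := hr rK.
rewrite Fv_inf // FFp //.
rewrite (nneseries_split 0 r.+1); last by move=> k _; rewrite lee_fin sqr_ge0.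
rewrite add0n.
set Y := (\sum_(r.+1 <= k <oo) _)%E.
have Y0 : (0 <= Y)%E by apply: nneseries_ge0 => k _ _; rewrite lee_fin sqr_ge0.
have Yle : (Y <= (e - (P x (m r.+1) - P x K) ^+ 2)%:E)%E.
  apply: lime_le.
    by apply: is_cvg_ereal_nneg_natsum => k _; rewrite lee_fin sqr_ge0.
  exists r.+1 => // N /= hN.
  rewrite sumEFin lee_fin.
  have [c1 c2 _] := tail_pts Kr hN (fun i _ _ => hm i).
  have := HK c1; rewrite c2; lra.
have Yf : Y \is a fin_num.
  by rewrite ge0_fin_numE // (le_lt_trans Yle) // ltry.
rewrite -(fineK Yf) sumEFin -EFinD /= big_nat_recr //=.
have yle := Yle; rewrite -(fineK Yf) lee_fin in yle.
apply: (@finish (P x K - P x (m r)) (P x (m r.+1) - P x K) (pinf x - P x K) (fine Y)).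
- exact: fine_ge0.
- lra.
- exact: c_bound.
- exact: HB.
- ring.
Qed.

Lemma main_est (A : set nat) : A `<=` posnat ->
  `|Fv x A - Fv x (A `&` [set k | (k <= K)%N])| <= 4 * B * Num.sqrt e + 2 * e.
Proof.
move=> Apos.
case: (pselect (finite_set A)) => fA; last first.
  have [m [m0 hm <-]] := enum_inf fA Apos.
  exact: main_inf.
have [s0 E0] := (iffLR (finite_seqP A)) fA.
set s := sort leq (undup s0).
have ms : forall y, (y \in s) = (y \in s0) by move=> y; rewrite mem_sort mem_undup.
have ss : sorted ltn (0%N :: s).
  rewrite /= path_min_sorted.
    by rewrite ltn_sorted_uniq_leq sort_uniq undup_uniq sort_sorted //; exact: leq_total.
  apply/allP => y; rewrite ms => hy; apply: Apos; rewrite E0; exact: hy.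
have EA : A = [set` map (nth 0%N (0%N :: s)) (iota 1 (size s))].
  have -> : map (nth 0%N (0%N :: s)) (iota 1 (size s)) = s.
    have -> : iota 1 (size s) = map (addn 1) (iota 0 (size s)) by rewrite -iotaDl.
    rewrite -map_comp -[RHS](mkseq_nth 0%N s) /mkseq; apply: eq_map => i /=.
    by [].
  rewrite E0; apply/seteqP; split => y h.
    by change (y \in s); rewrite ms; exact: h.
  by change (y \in s0); rewrite -ms; exact: h.
rewrite EA; apply: main_fin => //.
move=> i hi; exact: (qlt ss (ltnSn i) hi).
Qed.

End Main.

Unset Implicit Arguments. Set Strict Implicit. Set Printing Implicit Defensive.


Lemma P_bounded (R : realType) (x : nat -> R) : inJ x ->
  exists B, forall u v, `|P x u - P x v| <= B.
Proof.
move=> hJ; have [M HM] := chain_bound hJ.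
have M0 : 0 <= M by have := HM [::] isT; rewrite /Q big_nil.
have H : forall u v, (u < v)%N -> `|P x v - P x u| <= Num.sqrt M.
  move=> u v uv; apply: sq_le_abs; first exact: sqrtr_ge0.
  rewrite sqr_sqrtr //; have := HM [:: (u, v)]; rewrite /= uv /Q big_seq1 /=; by apply.
exists (Num.sqrt M) => u v; case: (ltngtP u v) => h.
- by rewrite distrC; exact: H.
- exact: H.
- by rewrite h subrr normr0 sqrtr_ge0.
Qed.

Lemma ind_ev (R : realType) (A_ : nat -> set nat) (A : set nat) :
  (forall k, (fun n => \1_(A_ n) k : R) @ \oo --> (\1_A k : R)) ->
  forall K, \forall n \near \oo, forall k, (k <= K)%N -> (k \in A_ n) = (k \in A).
Proof.
move=> hind.
have one : forall k, \forall n \near \oo, (k \in A_ n) = (k \in A).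
  move=> k; have := hind k; move/cvgrPdist_lt => /(_ (1/2)) h.
  have h2 : (0 : R) < 1/2 by rewrite divr_gt0.
  apply: filterS (h h2) => n; rewrite !indicE.
  case: (k \in A_ n); case: (k \in A) => //=; rewrite ?subr0 ?sub0r ?normrN normr1 => hh; lra.
elim=> [|K IH].
  by apply: filterS (one 0%N) => n hn k; rewrite leqn0 => /eqP ->.
apply: filterS2 IH (one K.+1) => n h1 h2 k; rewrite leq_eqVlt ltnS => /orP[/eqP -> //|hk].
exact: h1.
Qed.

Theorem proposition3p2 (R : realType) (x : nat -> R)
  (A_ : nat -> set nat) (A : set nat) :
  inJ x ->
  (forall k, (0 < k)%N -> x k != 0) ->
  (forall n, A_ n `<=` posnat) ->
  (forall n, finite_set (A_ n)) ->
  (forall n, A_ n !=set0) ->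
  A `<=` posnat ->
  (forall k, (fun n => \1_(A_ n) k : R) @ \oo --> (\1_A k : R)) ->
  (fun n => normA x (A_ n)) @ \oo --> normA x A.
Proof.
move=> hJ _ Apos_ _ _ Apos hind.
suff cvF : (fun n => Fv x (A_ n)) @ \oo --> Fv x A.
  exact: (cvg_comp _ _ cvF (@sqrt_continuous R (Fv x A))).
have [B HB] := P_bounded _ _ hJ.
have B0 : 0 <= B by apply: le_trans (HB 0%N 0%N).
apply/cvgrPdist_le => eps eps0.
set d := Num.min 1 (eps / (8 * B + 4)).
have c0 : 0 < 8 * B + 4 by lra.
have d0 : 0 < d by rewrite lt_min ltr01 divr_gt0.
have d1 : d <= 1 by rewrite ge_min lexx.
have d2 : (8 * B + 4) * d <= eps.
  rewrite mulrC -ler_pdivlMr //; rewrite /d ge_min lexx orbT //.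
have e0 : 0 < d ^+ 2 by rewrite exprn_gt0.
have [K HK] := tail_small hJ e0.
have sq : Num.sqrt (d ^+ 2) = d by rewrite sqrtr_sqr gtr0_norm.
apply: filterS (ind_ev _ _ _ hind K) => n hn.
have EK : A_ n `&` [set k | (k <= K)%N] = A `&` [set k | (k <= K)%N].
  apply/seteqP; split => k [h1 h2]; split => //.
    by rewrite -in_setE -hn // in_setE.
  by rewrite -in_setE hn // in_setE.
have m1 := main_est hJ HK (ltW e0) HB Apos.
have m2 := main_est hJ HK (ltW e0) HB (Apos_ n).
rewrite EK sq in m2; rewrite sq in m1.
have -> : Fv x A - Fv x (A_ n) =
   (Fv x A - Fv x (A `&` [set k | (k <= K)%N])) - (Fv x (A_ n) - Fv x (A `&` [set k | (k <= K)%N])).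
  by ring.
apply: le_trans (ler_normB _ _) _.
have : d ^+ 2 <= d by rewrite expr2 ler_piMr // ltW.
nra.
Qed.
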